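(* Let $N\ge K\ge1$, $\mathbf{H}\in\mathbb{R}^{N\times K}$ full column rank, with orthonormal eigenvectors $\mathbf{u}_1,\ldots,\mathbf{u}_N$ of $\mathbf{H}\mathbf{H}^T$, $\mathbf{H}\mathbf{H}^T\mathbf{u}_i=\rho_i^2\mathbf{u}_i$, $\rho_1^2\ge\cdots\ge\rho_N^2\ge0$, $\rho_1^2>\rho_N^2$. Fix positive integers $M_1,M_2,N_b$, $\sigma_x^2,\sigma_0^2>0$ and $P_{FA}\in(0,1)$, and let $\gamma=\mathbb{Q}_{F(N_b,N_b)}^{-1}(P_{FA})$. For unit vectors $\mathbf{t}_1,\mathbf{t}_2\in\mathbb{R}^N$ with $\mathbf{t}_1^T\mathbf{t}_2=0$ (corresponding to the fully-correlated design $\boldsymbol{\Phi}_s=\frac1{\sqrt M}\mathbf{1}_{M_1,1}\otimes\mathbf{t}_1^T$, $\boldsymbol{\Phi}_o=\frac1{\sqrt M}\mathbf{1}_{M_2,1}\otimes\mathbf{t}_2^T$, $M=M_1+M_2$) define $$P_D(\mathbf{t}_1,\mathbf{t}_2)=\mathbb{Q}_{F(N_b,N_b)}\Big(\frac{\sigma_0^2+M_2\sigma_x^2\mathbf{t}_2^T\mathbf{H}\mathbf{H}^T\mathbf{t}_2}{\sigma_0^2+M_1\sigma_x^2\mathbf{t}_1^T\mathbf{H}\mathbf{H}^T\mathbf{t}_1}\gamma\Big).$$ Then $(\mathbf{t}_1,\mathbf{t}_2)=(\mathbf{u}_1,\mathbf{u}_N)$ maximizes $P_D(\mathbf{t}_1,\mathbf{t}_2)$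 over all such pairs.
   Context: $\mathbb{Q}_{F(d_1,d_2)}(x)=\Pr(X>x)$ for $X$ $F$-distributed with $(d_1,d_2)$ degrees of freedom; it is continuous and strictly decreasing on $(0,\infty)$ and $\mathbb{Q}^{-1}_{F(d_1,d_2)}$ is its inverse. $\mathbf{1}_{P,1}$ is the all-ones column vector of length $P$, $\otimes$ the Kronecker product. In the paper, $P_D(\mathbf{t}_1,\mathbf{t}_2)$ is the expression used as the detection probability, at false-alarm probability $P_{FA}$, of the test $\frac{M_1\sum_n|\bar z_s[n]|^2}{M_2\sum_n|\bar z_o[n]|^2}\gtrless\gamma$ (averaged outputs of the two device groups) with this design. *)

(* Defs.v *)
From HB Require Import structures.
From mathcomp Require Import all_boot all_order all_algebra.
From mathcomp Require Import all_classical all_reals all_analysis.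
Set Implicit Arguments. Unset Strict Implicit. Unset Printing Implicit Defensive.
Import Order.TTheory GRing.Theory Num.Theory.
Local Open Scope ring_scope.
Local Open Scope classical_set_scope.

(* Unnormalized density of the F(d1,d2) distribution:
   x^(d1/2 - 1) (1 + d1 x / d2)^(-(d1+d2)/2) for x > 0, and 0 otherwise. *)
Definition F_kernel (R : realType) (d1 d2 : nat) (x : R) : R :=
  if 0 < x then
    x `^ (d1%:R / 2 - 1) * (1 + d1%:R * x / d2%:R) `^ (- ((d1 + d2)%:R / 2))
  else 0.

Definition QF (R : realType) (d1 d2 : nat) (x : R) : R :=
  fine (\int[@lebesgue_measure R]_(y in `]x, +oo[) (F_kernel d1 d2 y)%:E)
  / fine (\int[@lebesgue_measure R]_(y in `]0, +oo[) (F_kernel d1 d2 y)%:E).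

Definition qform (R : realType) (N : nat) (A : 'M[R]_N) (t : 'cV[R]_N) : R :=
  ((t^T *m A *m t) 0 0).

Definition PD (R : realType) (N K : nat) (H : 'M[R]_(N, K)) (M1 M2 Nb : nat)
  (sx2 s02 gamma : R) (t1 t2 : 'cV[R]_N) : R :=
  QF Nb Nb ((s02 + M2%:R * sx2 * qform (H *m H^T) t2)
            / (s02 + M1%:R * sx2 * qform (H *m H^T) t1) * gamma).

(* Main.v *)
Require Import Defs.
From HB Require Import structures.
From mathcomp Require Import all_boot all_order all_algebra.
From mathcomp Require Import all_classical all_reals all_analysis.
From mathcomp Require Import zify.
Import Order.TTheory GRing.Theory Num.Theory.
Local Open Scope ring_scope.

Section Aux.
Variable R : realType.
Local Notation mu := (@lebesgue_measure R).

Lemma int_mono (f g : R -> \bar R) : (forall x, (0 <= f x)%E) -> (forall x, (f x <= g x)%E) ->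
  (\int[mu]_x f x <= \int[mu]_x g x)%E.
Proof.
move=> f0 fg.
have g0 : forall x, (0 <= g x)%E by move=> x; exact: le_trans (f0 x) (fg x).
rewrite !ge0_integralTE //.
apply: ereal_sup_le => _ [h hf <-]; exists h => //= x.
exact: le_trans (hf x) (fg x).
Qed.

Lemma kernel_ge0 d1 d2 (x : R) : 0 <= F_kernel d1 d2 x.
Proof. rewrite /F_kernel; case: ifP => // _; apply: mulr_ge0; exact: powR_ge0. Qed.

Lemma kernel_le0 d1 d2 (x : R) : x <= 0 -> F_kernel d1 d2 x = 0.
Proof. by rewrite /F_kernel => x0; rewrite ltNge x0. Qed.

Definition II d1 d2 (x : R) :=
  (\int[mu]_(y in `]x, +oo[) (F_kernel d1 d2 y)%:E)%E.

Lemma II_ge0 d1 d2 x : (0 <= II d1 d2 x)%E.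
Proof. by apply: integral_ge0 => y _; rewrite lee_fin kernel_ge0. Qed.

Lemma mem_oo (x z : R) : (z \in (@mkset R (fun w => is_true (w \in `]x,+oo[)))) = (x < z).
Proof. apply/idP/idP; rewrite in_setE /= in_itv /= andbT; by []. Qed.

Lemma II_anti d1 d2 x y : x <= y -> (II d1 d2 y <= II d1 d2 x)%E.
Proof.
move=> xy; rewrite /II [X in (X <= _)%E]integral_mkcond [X in (_ <= X)%E]integral_mkcond; apply: int_mono.
  by move=> z; rewrite /patch; case: ifP => // _; rewrite lee_fin kernel_ge0.
move=> z; rewrite /patch !mem_oo; case: ifP => [yz|_].
  by rewrite (le_lt_trans xy yz).
by case: ifP => // _; rewrite lee_fin kernel_ge0.
Qed.

Lemma II_nonpos d1 d2 x : x <= 0 -> II d1 d2 x = II d1 d2 0.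
Proof.
move=> x0; rewrite /II [LHS]integral_mkcond [RHS]integral_mkcond; congr integral; apply/funext => z.
rewrite /patch !mem_oo.
case: (ltP 0 z) => z0.
  by rewrite (le_lt_trans x0 z0).
by case: ifP => // _; rewrite kernel_le0.
Qed.

Lemma fin_between (x : \bar R) (c : R) : (0 <= x)%E -> (x <= c%:E)%E -> x = (fine x)%:E.
Proof. by case: x. Qed.

Lemma quad_bounds (N : nat) (A : 'M[R]_N) (u : 'I_N -> 'cV[R]_N) (r : 'I_N -> R)
  (lo hi : R) (t : 'cV[R]_N) :
  (forall i j, (u i)^T *m u j = (i == j)%:R%:M) ->
  (forall i, A *m u i = r i *: u i) ->
  (forall i, lo <= r i <= hi) -> t^T *m t = 1%:M ->
  lo <= qform A t <= hi.
Proof.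
move=> hu hA hr ht.
pose U : 'M[R]_N := \matrix_(k, j) u j k 0.
have UU : U^T *m U = 1%:M.
  apply/matrixP => i j.
  have h := congr1 (fun M : 'M[R]_1 => M 0 0) (hu i j).
  rewrite /= [(_%:M : 'M[R]_1) _ _]mxE eqxx mulr1n in h.
  rewrite [(1%:M : 'M[R]_N) _ _]mxE -h.
  rewrite !mxE; apply: eq_bigr => k _; rewrite !mxE //.
have UUt : U *m U^T = 1%:M := mulmx1C UU.
pose D : 'M[R]_N := diag_mx (\row_j r j).
have AU : A *m U = U *m D.
  apply/matrixP => k j; rewrite mul_mx_diag !mxE.
  have h := congr1 (fun M : 'cV[R]_N => M k 0) (hA j).
  rewrite /= !mxE in h; rewrite mulrC -h.
  by apply: eq_bigr => l _; rewrite !mxE.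
pose c := U^T *m t.
have qE : qform A t = \sum_i r i * (c i 0) ^+ 2.
  rewrite /qform.
  have -> : t^T *m A *m t = c^T *m D *m c.
    rewrite /c trmx_mul trmxK.
    have -> : t^T *m A *m t = t^T *m A *m (U *m U^T *m t) by rewrite UUt mul1mx.
    by rewrite !mulmxA -(mulmxA t^T A U) AU !mulmxA.
  rewrite mxE; apply: eq_bigr => i _; rewrite mul_mx_diag !mxE.
  by rewrite mulrAC -expr2 mulrC.
have sE : \sum_i (c i 0) ^+ 2 = 1.
  have cc : c^T *m c = 1%:M.
    by rewrite /c trmx_mul trmxK mulmxA -(mulmxA t^T) UUt mulmx1 ht.
  have h := congr1 (fun M : 'M[R]_1 => M 0 0) cc.
  rewrite /= [(_%:M : 'M[R]_1) _ _]mxE eqxx mulr1n in h.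
  rewrite -h mxE.
  by apply: eq_bigr => i _; rewrite !mxE expr2.
rewrite qE; apply/andP; split.
  rewrite -[lo]mulr1 -sE mulr_sumr; apply: ler_sum => i _.
  by apply: ler_wpM2r; [exact: sqr_ge0|case/andP: (hr i)].
rewrite -[hi]mulr1 -sE mulr_sumr; apply: ler_sum => i _.
by apply: ler_wpM2r; [exact: sqr_ge0|case/andP: (hr i)].
Qed.
Lemma qform_eig (N : nat) (A : 'M[R]_N) (v : 'cV[R]_N) (a : R) :
  v^T *m v = 1%:M -> A *m v = a *: v -> qform A v = a.
Proof.
move=> hv hA; rewrite /qform -mulmxA hA -scalemxAr hv.
by rewrite !mxE eqxx mulr1n mulr1.
Qed.
Lemma fine_nz (x : \bar R) : fine x != 0 -> x = (fine x)%:E.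
Proof. by case: x => //=; rewrite eqxx. Qed.
End Aux.
Arguments II {R}.
Arguments II_ge0 {R}.
Arguments II_anti {R}.
Arguments II_nonpos {R}.
Arguments fin_between {R}.
Arguments qform_eig {R}.
Arguments quad_bounds {R}.

Theorem corollary2 (R : realType) (N K : nat) (H : 'M[R]_(N, K))
  (u : 'I_N -> 'cV[R]_N) (rho2 : 'I_N -> R) (i1 iN : 'I_N)
  (M1 M2 Nb : nat) (sx2 s02 PFA gamma : R) :
  (1 <= K)%N -> (K <= N)%N ->
  \rank H = K ->
  (forall i j : 'I_N, (u i)^T *m u j = (i == j)%:R%:M) ->
  (forall i : 'I_N, H *m H^T *m u i = rho2 i *: u i) ->
  (forall i : 'I_N, 0 <= rho2 i) ->
  (forall i j : 'I_N, (i <= j)%N -> rho2 j <= rho2 i) ->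
  val i1 = 0%N -> val iN = N.-1 ->
  rho2 iN < rho2 i1 ->
  (0 < M1)%N -> (0 < M2)%N -> (0 < Nb)%N ->
  0 < sx2 -> 0 < s02 ->
  0 < PFA < 1 ->
  QF Nb Nb gamma = PFA ->
  forall t1 t2 : 'cV[R]_N,
    t1^T *m t1 = 1%:M -> t2^T *m t2 = 1%:M -> t1^T *m t2 = 0 ->
    PD H M1 M2 Nb sx2 s02 gamma t1 t2
      <= PD H M1 M2 Nb sx2 s02 gamma (u i1) (u iN).

Proof.
move=> K1 KN rk hu hA hr0 hrm hi1 hiN rlt M10 M20 Nb0 sx0 s00 /andP[P0 P1] hg t1 t2 ht1 ht2 _.
have bnd : forall t : 'cV[R]_N, t^T *m t = 1%:M ->
    rho2 iN <= qform (H *m H^T) t <= rho2 i1.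
  move=> t ht; apply: (@quad_bounds _ _ _ _ _ _ _ _ hu hA) => // i; apply/andP; split.
    apply: hrm; rewrite hiN; have := ltn_ord i; lia.
  by apply: hrm; rewrite hi1.
have hu1 : (u i1)^T *m u i1 = 1%:M by rewrite hu eqxx.
have huN : (u iN)^T *m u iN = 1%:M by rewrite hu eqxx.
pose I0 := @II R Nb Nb 0.
have QFE : forall x, QF Nb Nb x = fine (II Nb Nb x) / fine I0 by [].
have C0 : fine I0 != 0.
  apply/eqP => e; move: hg; rewrite QFE e invr0 mulr0 => e'.
  by move: P0; rewrite -e' ltxx.
have Cpos : 0 < fine I0 by rewrite lt_neqAle eq_sym C0 fine_ge0 // II_ge0.
have I0E : I0 = (fine I0)%:E.
  exact: fine_nz.
have gpos : 0 < gamma.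
  rewrite ltNge; apply/negP => g0.
  move: hg; rewrite QFE II_nonpos // -/I0 divff // => e.
  by move: P1; rewrite -e ltxx.
have Qanti : forall a b : R, 0 <= a -> a <= b -> QF Nb Nb b <= QF Nb Nb a.
  move=> a b a0 ab; rewrite !QFE; apply: ler_wpM2r; first by rewrite invr_ge0 ltW.
  have Ia : (II Nb Nb a <= I0)%E by apply: II_anti.
  have Ib : (II Nb Nb b <= II Nb Nb a)%E by apply: II_anti.
  rewrite I0E in Ia.
  have Ea := fin_between _ _ (II_ge0 _ _ _) Ia.
  have Eb := fin_between _ _ (II_ge0 _ _ _) (le_trans Ib Ia).
  by move: Ib; rewrite Ea Eb lee_fin.
rewrite /PD; apply: Qanti.
  apply: mulr_ge0 (ltW gpos); apply: divr_ge0.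
    apply: addr_ge0; first exact: ltW. apply: mulr_ge0; first by apply: mulr_ge0 => //; exact: ltW.
    by case/andP: (bnd _ huN) => h _; exact: le_trans (hr0 iN) h.
  apply: addr_ge0; first exact: ltW. apply: mulr_ge0; first by apply: mulr_ge0 => //; exact: ltW.
  by case/andP: (bnd _ hu1) => h _; exact: le_trans (hr0 iN) h.
apply: ler_wpM2r; first exact: ltW.
case/andP: (bnd _ ht1) => a1 b1; case/andP: (bnd _ ht2) => a2 b2.
case/andP: (bnd _ hu1) => a3 b3; case/andP: (bnd _ huN) => a4 b4.
rewrite (qform_eig _ _ _ _ hu1 (hA i1)) (qform_eig _ _ _ _ huN (hA iN)).
set a := _ + _ * qform _ t2; set b := _ + _ * qform _ t1.
set a0 := _ + _ * rho2 iN; set b0 := _ + _ * rho2 i1.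
have m1 : 0 < M1%:R * sx2 :> R by rewrite mulr_gt0 // ltr0n.
have m2 : 0 < M2%:R * sx2 :> R by rewrite mulr_gt0 // ltr0n.
have a0p : 0 < a0 by rewrite ltr_pwDl // mulr_ge0 // ltW.
have aa : a0 <= a by rewrite lerD2l ler_pM2l.
have bp : 0 < b.
  rewrite /b ltr_pwDl //; apply: mulr_ge0; first exact: ltW.
  exact: le_trans (hr0 iN) a1.
have bb : b <= b0 by rewrite lerD2l ler_pM2l.
have b0p : 0 < b0 by apply: lt_le_trans bb.
rewrite ler_pdivrMr // mulrAC ler_pdivlMr //.
by apply: ler_pM => //; apply: ltW.
Qed.
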